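(* Let $\mathcal{L}$ be a horizontal segment $EF$ of length $1$ in the plane, and let $\mathcal{T}$ be an equilateral triangle (the convex hull of a V-shaped unit worm) with side length $\frac12$ and vertices $P,Q,R$ in counterclockwise order, labelled so that, with $O_2$ its centroid, $P=O_2+\frac{\sqrt3}{6}(\cos\beta,\sin\beta)$ for some $\beta\in[\frac{\pi}{6},\frac{5\pi}{6})$. Then $$\mu(\mathcal{L},\mathcal{T})\geq \tfrac14\max\Bigl\{\sin\bigl(\beta-\tfrac{\pi}{6}\bigr),\ \sin\bigl(\beta+\tfrac{\pi}{6}\bigr)\Bigr\}.$$
   Context: $\mu(K_1,\dots,K_n)$ denotes the area of the convex hull of $K_1\cup\dots\cup K_n$. (With this labelling, $\overrightarrow{QP}$ has argument $\beta-\frac{\pi}{6}$ and $\overrightarrow{RP}$ has argument $\beta+\frac{\pi}{6}$.) *)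

(* Defs.v *)
From HB Require Import structures.
From mathcomp Require Import all_boot all_order all_algebra.
From mathcomp Require Import all_classical all_reals all_analysis.
Set Implicit Arguments. Unset Strict Implicit. Unset Printing Implicit Defensive.
Import Order.TTheory GRing.Theory Num.Theory.
Local Open Scope classical_set_scope.
Local Open Scope ring_scope.

Section Plane.
Variable R : realType.

Definition convex_set2 (C : set (R * R)) : Prop :=
  forall (x y : R * R) (t : R), C x -> C y -> 0 <= t <= 1 ->
    C (t * x.1 + (1 - t) * y.1, t * x.2 + (1 - t) * y.2).

Definition conv_hull (A : set (R * R)) : set (R * R) :=
  [set p | forall C, A `<=` C -> convex_set2 C -> C p].

Definition area (A : set (R * R)) : \bar R :=
  ((@lebesgue_measure R) \x (@lebesgue_measure R))%E A.

Definition mu2 (K1 K2 : set (R * R)) : \bar R := area (conv_hull (K1 `|` K2)).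

End Plane.

(* Main.v *)
Require Import Defs.
From HB Require Import structures.
From mathcomp Require Import all_boot all_order all_algebra.
From mathcomp Require Import all_classical all_reals all_analysis.
From mathcomp Require Import measurable_realfun ring lra.
Import Order.TTheory GRing.Theory Num.Theory.
Import numFieldNormedType.Exports.
Local Open Scope classical_set_scope.
Local Open Scope ring_scope.
Section S.
Variable R : realType.
Local Open Scope ereal_scope.
Lemma leb_mono (A B : set R) : A `<=` B -> lebesgue_measure A <= lebesgue_measure B.
Proof. move=> AB; exact: le_mu_ext. Qed.
Lemma leb_ge0 (A : set R) : 0 <= lebesgue_measure A.
Proof. exact: mu_ext_ge0. Qed.
Lemma area_mono (A B : set (R * R)) : A `<=` B -> area A <= area B.
Proof.
move=> AB; rewrite /area /product_measure1.
rewrite !ge0_integralTE; try by move=> x; exact: leb_ge0.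
apply: le_ereal_sup => _ [h /= hf <-]; exists h => //= x.
apply: le_trans (hf x) _; apply: leb_mono => y; rewrite /xsection/= !inE; exact: AB.
Qed.
Arguments area_mono [A B].


Lemma area_ysec (A : set (R * R)) : measurable A ->
  area A = \int[lebesgue_measure]_y lebesgue_measure (ysection A y).
Proof.
move=> mA; rewrite /area /product_measure1.
have := indic_fubini_tonelli lebesgue_measure lebesgue_measure mA.
by rewrite indic_fubini_tonelli_FE// indic_fubini_tonelli_GE.
Qed.

Definition tri (x0 y0 xa h : R) : set (R * R) :=
  [set p | (0 < (p.2 - y0) / h <= 1)%R /\
     (x0 + (p.2 - y0) / h * (xa - x0) <= p.1 <= x0 + 1 + (p.2 - y0) / h * (xa - x0 - 1))%R].

Lemma mfun_snd_aff (c k : R) : measurable_fun [set: R * R] (fun p : R * R => (p.2 - c) * k)%R.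
Proof.
apply: measurable_funM; last exact: measurable_cst.
apply: measurable_funB; [exact: measurable_snd|exact: measurable_cst].
Qed.


Lemma mpre (f : R * R -> R) (Y : set R) : measurable_fun setT f -> measurable Y ->
  measurable (f @^-1` Y).
Proof. by move=> mf mY; rewrite -[_ @^-1` _]setTI; exact: mf. Qed.

Lemma tri_measurable x0 y0 xa h : measurable (tri x0 y0 xa h).
Proof.
pose f1 := (fun p : R * R => (p.2 - y0) * h^-1)%R.
have m1 : measurable_fun setT f1 by exact: mfun_snd_aff.
have m2 : measurable_fun setT (fun p : R * R => p.1 - x0 - f1 p * (xa - x0))%R.
  apply: measurable_funB; last by apply: measurable_funM => //; exact: measurable_cst.
  by apply: measurable_funB; [exact: measurable_fst|exact: measurable_cst].
have m3 : measurable_fun setT (fun p : R * R => x0 + 1 + f1 p * (xa - x0 - 1) - p.1)%R.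
  apply: measurable_funB; last exact: measurable_fst.
  apply: measurable_funD; first exact: measurable_cst.
  by apply: measurable_funM => //; exact: measurable_cst.
have -> : tri x0 y0 xa h = f1 @^-1` `]0%R, 1%R] `&`
   (fun p : R * R => p.1 - x0 - f1 p * (xa - x0))%R @^-1` `[0%R, +oo[ `&`
   (fun p : R * R => x0 + 1 + f1 p * (xa - x0 - 1) - p.1)%R @^-1` `[0%R, +oo[.
  apply/seteqP; split => p /=; rewrite /tri /f1 /= !in_itv /= ?andbT.
    move=> [-> /andP[a1 a2]]; split; [split|] => //; lra.
  move=> [[-> a1] a2]; split => //; apply/andP; split; lra.
by apply: measurableI; [apply: measurableI|]; apply: mpre => //; exact: measurable_itv.
Qed.

Lemma leb_cc (a b : R) : (a <= b)%R -> lebesgue_measure `[a, b] = (b - a)%:E.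
Proof.
move=> ab; rewrite lebesgue_measure_itv /= lte_fin.
by case: ltgtP ab => // -> _; rewrite subrr.
Qed.

Lemma ysec_tri x0 y0 xa h y : (h != 0)%R ->
  lebesgue_measure (ysection (tri x0 y0 xa h) y) =
  if (0 < (y - y0) / h <= 1)%R then (1 - (y - y0) / h)%:E else 0.
Proof.
move=> h0; set t := ((y - y0) / h)%R.
case: ifPn => ct.
  have -> : ysection (tri x0 y0 xa h) y = `[(x0 + t * (xa - x0))%R, (x0 + 1 + t * (xa - x0 - 1))%R]%classic.
    apply/seteqP; split => x; rewrite /ysection /= inE /tri /= in_itv /=; first by case.
    by move=> H; split.
  rewrite leb_cc; first by congr (_%:E); ring.
  move/andP: ct => [c1 c2]; lra.
have -> : ysection (tri x0 y0 xa h) y = set0.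
  apply/seteqP; split => x //; rewrite /ysection /= inE /tri /=.
  by move=> [H _]; move: ct; rewrite /t H.
by rewrite measure0.
Qed.
Local Close Scope ereal_scope.
Definition Fq (y0 c y : R) : R := y - (y - y0) ^+ 2 * c.
Lemma dFq (y0 c x : R) : is_derive x (1:R) (Fq y0 c) (1 - (x - y0) * 2 * c).
Proof.
rewrite /Fq; apply: is_derive_eq.
by rewrite !scaler0 !subr0 add0r; rewrite -![_ *: _]/(_ * _); ring.
Qed.
Lemma dLin (y0 h x : R) : is_derive x (1:R) (fun y => 1 - (y - y0) / h) (- h^-1).
Proof.
apply: is_derive_eq.
by rewrite !scaler0 ?subr0 ?add0r; rewrite -![_ *: _]/(_ * _); ring.
Qed.
Lemma Fq_cont (y0 c x : R) : Fq y0 c z @[z --> x] --> Fq y0 c x.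
Proof.
apply: differentiable_continuous; apply/derivable1_diffP.
exact: (@ex_derive _ _ _ _ _ _ _ (dFq y0 c x)).
Qed.

Lemma ftc_lin (y0 h lo hi : R) : lo < hi -> h != 0 ->
  (\int[lebesgue_measure]_(y in `[lo, hi]) (1 - (y - y0) / h)%:E =
   (Fq y0 (2 * h)^-1 hi - Fq y0 (2 * h)^-1 lo)%:E)%E.
Proof.
move=> lohi h0.
have Fd x : derivable (Fq y0 (2 * h)^-1) x 1 := (@ex_derive _ _ _ _ _ _ _ (dFq y0 (2 * h)^-1 x)).
rewrite (@continuous_FTC2 _ (fun y => 1 - (y - y0) / h) (Fq y0 (2 * h)^-1) lo hi) //.
- apply: derivable_within_continuous => x _.
  exact: (@ex_derive _ _ _ _ _ _ _ (dLin y0 h x)).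
- split.
  + by move=> x _; exact: Fd.
  + exact/cvg_at_right_filter/Fq_cont.
  + exact/cvg_at_left_filter/Fq_cont.
- move=> x _; rewrite derive1E (@derive_val _ _ _ _ _ _ _ (dFq y0 (2 * h)^-1 x)).
  by field.
Qed.

Lemma point0 : (point : \bar R) = 0%E.
Proof. by []. Qed.

Lemma mg (y0 h : R) (D : set R) : measurable_fun D (fun y => (1 - (y - y0) / h)%:E).
Proof.
apply/measurable_EFinP; apply: measurable_funTS.
apply: continuous_measurable_fun => x.
apply: differentiable_continuous; apply/derivable1_diffP.
exact: (@ex_derive _ _ _ _ _ _ _ (dLin y0 h x)).
Qed.

Lemma area_tri x0 y0 xa h : h != 0 -> area (tri x0 y0 xa h) = (`|h| / 2)%:E.
Proof.
move=> h0; rewrite area_ysec; last exact: tri_measurable.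
under eq_integral => y _ do rewrite ysec_tri //.
have h20 : 2 * h != 0 by rewrite mulf_neq0 // pnatr_eq0.
case: (ltgtP h 0) => [hlt|hgt|h00]; last by rewrite h00 eqxx in h0.
{ transitivity (\int[lebesgue_measure]_y
     ((fun y : R => ((1 - (y - y0) / h)%R)%:E) \_ `](y0 + h)%R, y0[) y)%E.
  { apply: eq_integral => y _; rewrite patchE mem_setE in_itv /=.
    rewrite ltr_ndivlMr // mul0r ler_ndivrMr // mul1r.
    case: (boolP (y0 + h < y < y0)) => H.
      by rewrite ifT //; move/andP: H => [H1 H2]; apply/andP; split; lra.
    case: ifPn => // /andP[H1 H2].
    have Hy : y = y0 + h.
      apply/eqP; rewrite eq_le; apply/andP; split; last lra.
      by rewrite leNgt; apply: contra H => Hlt; apply/andP; split; lra.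
    by rewrite Hy point0; congr (_%:E); field. }
  rewrite -integral_mkcond -(@integral_itv_bndoo _ _ _ _ true false); last exact: mg.
  rewrite ftc_lin //; last lra.
  by congr (_%:E); rewrite ltr0_norm // /Fq; field. }
transitivity (\int[lebesgue_measure]_y
     ((fun y : R => ((1 - (y - y0) / h)%R)%:E) \_ `]y0, (y0 + h)%R[) y)%E.
{ apply: eq_integral => y _; rewrite patchE mem_setE in_itv /=.
  rewrite ltr_pdivlMr // mul0r ler_pdivrMr // mul1r.
  case: (boolP (y0 < y < y0 + h)) => H.
    by rewrite ifT //; move/andP: H => [H1 H2]; apply/andP; split; lra.
  case: ifPn => // /andP[H1 H2].
  have Hy : y = y0 + h.
    apply/eqP; rewrite eq_le; apply/andP; split; first lra.
    by rewrite leNgt; apply: contra H => Hlt; apply/andP; split; lra.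
  by rewrite Hy point0; congr (_%:E); field. }
rewrite -integral_mkcond -(@integral_itv_bndoo _ _ _ _ true false); last exact: mg.
rewrite ftc_lin //; last lra.
by congr (_%:E); rewrite gtr0_norm // /Fq; field.
Qed.

Lemma hull_sub (A : set (R * R)) : A `<=` conv_hull A.
Proof. by move=> p Ap C HA _; exact: HA. Qed.

Lemma hull_convex (A : set (R * R)) : convex_set2 (conv_hull A).
Proof.
rewrite /convex_set2 /conv_hull /= => x y t hx hy t01 C HA cC.
exact: (cC x y t (hx C HA cC) (hy C HA cC) t01).
Qed.

Lemma hull_mono (A B : set (R * R)) : A `<=` B -> conv_hull A `<=` conv_hull B.
Proof. by move=> AB p hp C BC cC; apply: hp => //; exact: subset_trans AB BC. Qed.

Lemma tri_in (C : set (R * R)) x0 y0 xa h : convex_set2 C ->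
  C (x0, y0) -> C (x0 + 1, y0) -> C (xa, y0 + h) -> tri x0 y0 xa h `<=` C.
Proof.
move=> cC hE hF hX [px py] [/andP[t0 t1] /andP[l1 l2]] /=.
move: t0 t1 l1 l2; rewrite /=; set t := (py - y0) / h => t0 t1 l1 l2.
have h0 : h != 0.
  by apply/eqP => h0; move: t0; rewrite /t h0 invr0 mulr0 ltxx.
have pyE : py = y0 + t * h by rewrite /t; field.
have [t1'|tlt1] := eqVneq t 1.
  have -> : (px, py) = (xa, y0 + h).
    by congr pair; [move: l1 l2; rewrite t1'; lra|rewrite pyE t1' mul1r].
  exact: hX.
have tl1 : t < 1 by rewrite lt_neqAle tlt1 t1.
have t1n : 1 - t != 0 by rewrite subr_eq0 eq_sym.
pose g := (px - t * xa) / (1 - t).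
have gl : x0 <= g by rewrite /g ler_pdivlMr ?subr_gt0 //; lra.
have gu : g <= x0 + 1 by rewrite /g ler_pdivrMr ?subr_gt0 //; lra.
have hG : C (g, y0).
  have -> : (g, y0) = ((x0 + 1 - g) * (x0, y0).1 + (1 - (x0 + 1 - g)) * (x0 + 1, y0).1,
                      (x0 + 1 - g) * (x0, y0).2 + (1 - (x0 + 1 - g)) * (x0 + 1, y0).2).
    by rewrite /=; congr pair; ring.
  by apply: cC => //; apply/andP; split; lra.
have -> : (px, py) = (t * (xa, y0 + h).1 + (1 - t) * (g, y0).1,
                      t * (xa, y0 + h).2 + (1 - t) * (g, y0).2).
  by rewrite /= /g pyE; congr pair; field.
by apply: cC => //; apply/andP; split; lra.
Qed.
Arguments tri_in [C x0 y0 xa h].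


Lemma area_ge0 (A : set (R * R)) : (0 <= area A)%E.
Proof. by rewrite /area /product_measure1; apply: integral_ge0 => x _; exact: leb_ge0. Qed.

Lemma key (H : set (R * R)) x0 y0 (X Y : R * R) : convex_set2 H ->
  H (x0, y0) -> H (x0 + 1, y0) -> H X -> H Y -> (((X.2 - Y.2) / 2)%:E <= area H)%E.
Proof.
move=> cH hE hF hX hY.
have HX : H (X.1, y0 + (X.2 - y0)) by rewrite addrC subrK; case: X hX.
have HY : H (Y.1, y0 + (Y.2 - y0)) by rewrite addrC subrK; case: Y hY.
case: (leP (X.2) (Y.2)) => hXY.
  by apply: (le_trans _ (area_ge0 H)); rewrite lee_fin; lra.
case: (leP y0 (Y.2)) => hy.
  have h0 : X.2 - y0 != 0 by apply/eqP; lra.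
  apply: (le_trans _ (area_mono (tri_in cH hE hF HX))).
  by rewrite area_tri // lee_fin gtr0_norm; lra.
case: (leP (X.2) y0) => hx.
  have h0 : Y.2 - y0 != 0 by apply/eqP; lra.
  apply: (le_trans _ (area_mono (tri_in cH hE hF HY))).
  by rewrite area_tri // lee_fin ltr0_norm; lra.
have hX0 : X.2 - y0 != 0 by apply/eqP; lra.
have hY0 : Y.2 - y0 != 0 by apply/eqP; lra.
have sub : tri x0 y0 X.1 (X.2 - y0) `|` tri x0 y0 Y.1 (Y.2 - y0) `<=` H.
  by move=> p [/(tri_in cH hE hF HX)|/(tri_in cH hE hF HY)].
apply: (le_trans _ (area_mono sub)).
have -> : area (tri x0 y0 X.1 (X.2 - y0) `|` tri x0 y0 Y.1 (Y.2 - y0)) =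
   (area (tri x0 y0 X.1 (X.2 - y0)) + area (tri x0 y0 Y.1 (Y.2 - y0)))%E.
  rewrite /area measureU //; try exact: tri_measurable.
  apply/seteqP; split => // p [[/andP[a _] _] [/andP[b _] _]].
  move: a b; rewrite ltr_pdivlMr ?subr_gt0 // ltr_ndivlMr ?subr_lt0 // !mul0r.
  lra.
rewrite !area_tri // -EFinD lee_fin gtr0_norm ?subr_gt0 // ltr0_norm ?subr_lt0 //.
lra.
Qed.
Lemma pi6 : let x := pi / 6 : R in cos x = Num.sqrt 3 / 2 /\ sin x = 1 / 2.
Proof.
move=> x.
have pi0 : (0 : R) < pi := pi_gt0 R.
have c0 : 0 < cos x by apply: cos_gt0_pihalf; rewrite /x; apply/andP; split; lra.
have s0 : 0 < sin x by apply: sin_gt0_pihalf; rewrite /x; apply/andP; split; lra.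
have cs := cos2Dsin2 x.
have c3 : cos (x + (x + x)) = 0.
  by rewrite (_ : x + (x + x) = pi / 2) ?cos_pihalf // /x; field.
rewrite !cosD !sinD in c3.
have e1 : cos x * cos x = 3 * (sin x * sin x).
  apply/eqP; rewrite -subr_eq0; apply/eqP.
  have : cos x * (cos x * cos x - 3 * (sin x * sin x)) = 0 by rewrite -c3; ring.
  by move/eqP; rewrite mulf_eq0 (gt_eqF c0) /= => /eqP.
have s2 : sin x = 1 / 2 by nra.
split => //.
have r0 : 0 <= Num.sqrt (3 : R) := sqrtr_ge0 _.
have r2 : Num.sqrt (3 : R) ^+ 2 = 3 by rewrite sqr_sqrtr.
nra.
Qed.

Lemma trig_diffs (beta : R) :
  Num.sqrt 3 / 6 * sin beta - Num.sqrt 3 / 6 * sin (beta + 2 * pi / 3) = sin (beta - pi / 6) / 2 /\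
  Num.sqrt 3 / 6 * sin beta - Num.sqrt 3 / 6 * sin (beta + 4 * pi / 3) = sin (beta + pi / 6) / 2.
Proof.
have [c1 s1] := pi6.
set x := pi / 6 in c1 s1 *.
have r2 : Num.sqrt (3 : R) ^+ 2 = 3 by rewrite sqr_sqrtr.
move: r2 c1; move: (Num.sqrt (3 : R)) => r r2 c1.
have c2 : cos (x + x) = 1 / 2 by rewrite cosD c1 s1; nra.
have s2 : sin (x + x) = r / 2 by rewrite sinD c1 s1; nra.
have c4 : cos ((x + x) + (x + x)) = - 1 / 2 by rewrite cosD c2 s2; nra.
have s4 : sin ((x + x) + (x + x)) = r / 2 by rewrite sinD c2 s2; nra.
have c8 : cos (((x + x) + (x + x)) + ((x + x) + (x + x))) = - 1 / 2 by rewrite cosD c4 s4; nra.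
have s8 : sin (((x + x) + (x + x)) + ((x + x) + (x + x))) = - r / 2 by rewrite sinD c4 s4; nra.
rewrite (_ : 2 * pi / 3 = (x + x) + (x + x)); last by rewrite /x; field.
rewrite (_ : 4 * pi / 3 = ((x + x) + (x + x)) + ((x + x) + (x + x))); last by rewrite /x; field.
rewrite sinB !(sinD beta) c4 s4 c8 s8 c1 s1.
split.
  have -> : r / 6 * sin beta - r / 6 * (sin beta * (- 1 / 2) + cos beta * (r / 2)) =
    r / 4 * sin beta - r ^+ 2 / 12 * cos beta  by field.
  by rewrite r2; field.
have -> : r / 6 * sin beta - r / 6 * (sin beta * (- 1 / 2) + cos beta * (- r / 2)) =
  r / 4 * sin beta + r ^+ 2 / 12 * cos beta by field.
by rewrite r2; field.
Qed.
End S.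

Lemma main_aux (R : realType) (x0 y0 beta : R) (P Q Rv : R * R) :
  P.2 - Q.2 = sin (beta - pi / 6) / 2 -> P.2 - Rv.2 = sin (beta + pi / 6) / 2 ->
  ((1 / 4 * Num.max (sin (beta - pi / 6)) (sin (beta + pi / 6)))%:E
     <= mu2 (conv_hull [set (x0, y0); ((x0 + 1)%R, y0)]) (conv_hull [set P; Q; Rv]))%E.
Proof.
move=> d1 d2; rewrite /mu2.
set L := conv_hull [set (x0, y0); _]; set T := conv_hull [set P; Q; Rv].
set H := conv_hull (L `|` T).
have cH : convex_set2 H := hull_convex _ _.
have LH : L `<=` H by move=> p Lp; apply: hull_sub; left.
have TH : T `<=` H by move=> p Tp; apply: hull_sub; right.
have hE : H (x0, y0) by apply: LH; apply: hull_sub; left.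
have hF : H (x0 + 1, y0) by apply: LH; apply: hull_sub; right.
have hP : H P.
  by apply: TH; apply: hull_sub; left; left.
have hQ : H Q by apply: TH; apply: hull_sub; left; right.
have hR : H Rv by apply: TH; apply: hull_sub; right.
have k1 := key _ _ _ _ _ _ cH hE hF hP hQ.
have k2 := key _ _ _ _ _ _ cH hE hF hP hR.
rewrite maxEle; case: ifP => _.
  by apply: le_trans _ k2; rewrite lee_fin d2; lra.
by apply: le_trans _ k1; rewrite lee_fin d1; lra.
Qed.

Theorem mainTheorem6 (R : realType) (x0 y0 a b beta : R) :
  pi / 6 <= beta < 5 * pi / 6 ->
  let E := (x0, y0) in
  let F := (x0 + 1, y0) in
  let rho := Num.sqrt 3 / 6 in
  let P := (a + rho * cos beta, b + rho * sin beta) in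
  let Q := (a + rho * cos (beta + 2 * pi / 3), b + rho * sin (beta + 2 * pi / 3)) in
  let Rv := (a + rho * cos (beta + 4 * pi / 3), b + rho * sin (beta + 4 * pi / 3)) in
  let L := conv_hull [set E; F] in
  let T := conv_hull [set P; Q; Rv] in
  ((1 / 4 * Num.max (sin (beta - pi / 6)) (sin (beta + pi / 6)))%:E
     <= mu2 L T)%E.
Proof.
move=> _.
have [d1 d2] := trig_diffs _ beta.
by apply: main_aux => /=; lra.
Qed.
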